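(* Let $G$ be a finite group, $N\trianglelefteq G$, and $\theta\in\mathrm{Irr}(N)$ nonlinear. Suppose $\theta$ extends to $\chi\in\mathrm{Irr}(G)$ (i.e. $\chi_N=\theta$). If $\chi$ is an m.i character of $G$, then $\theta$ is an m.i character of $N$.
   Context: A nonlinear $\chi\in\mathrm{Irr}(G)$ is an m.i character of $G$ if there exist a proper subgroup $U<G$, $\lambda\in\mathrm{Irr}(U)$ and an integer $m\ge1$ with $\lambda^G=m\chi$. *)

(* Defs.v *)
From HB Require Import structures.
From mathcomp Require Import all_boot all_order all_algebra all_fingroup all_solvable all_field all_character.
Set Implicit Arguments. Unset Strict Implicit. Unset Printing Implicit Defensive.
Import GRing.Theory Num.Theory.
Local Open Scope ring_scope.

Definition mi_char (gT : finGroupType) (G : {group gT}) (chi : 'CF(G)) : Prop :=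
  [/\ chi \in irr G, ~~ (chi \is a linear_char) &
      exists (U : {group gT}) (lambda : 'CF(U)) (m : nat),
        [/\ U \proper G, lambda \in irr U, (0 < m)%N & 'Ind[G] lambda = chi *+ m]].

(* Main.v *)
Require Import Defs.
From HB Require Import structures.
From mathcomp Require Import all_boot all_order all_algebra all_fingroup all_solvable all_field all_character.
Import GRing.Theory Num.Theory.
Local Open Scope ring_scope.


Lemma sum_mulg (gT : finGroupType) (A B : {group gT}) (F : gT -> algC) :
  \sum_(a in A) \sum_(b in B) F (a * b)%g =
  #|A :&: B|%:R * \sum_(y in (A * B)%g) F y.
Proof.
have inner a : a \in A ->
  \sum_(b in B) F (a * b)%g = \sum_(y in (A * B)%g) (if (a^-1 * y)%g \in B then F y else 0).
  move=> Aa; rewrite -big_mkcondr /=.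
  rewrite (reindex_inj (mulgI (a^-1)%g)) /=.
  apply: eq_big => [y|y _]; last by rewrite mulKVg.
  apply/idP/idP => [By|/andP[]//].
  by rewrite By andbT -[y](mulKVg a) mem_mulg.
rewrite (eq_bigr _ inner) exchange_big /= mulr_sumr; apply: eq_bigr => y ABy.
rewrite -big_mkcondr /= sumr_const mulr_natl; congr (_ *+ _).
case/mulsgP: ABy => a0 b0 Aa0 Bb0 ->.
rewrite -(card_lcoset _ a0); apply: eq_card => a.
rewrite mem_lcoset inE [_ \in _]/=; apply/andP/andP => [[Aa Ba]|[Aa Ba]].
  split; first by rewrite groupM ?groupV.
  have: (a^-1 * a0)%g \in B by rewrite -(groupMr _ Bb0) -mulgA.
  by rewrite -groupV invMg invgK.
have Aa': a \in A by rewrite -[a](mulKVg a0) groupM.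
split=> //; rewrite mulgA groupMr //.
by rewrite -groupV invMg invgK.
Qed.
Lemma mackey (gT : finGroupType) (N U : {group gT}) (psi : 'CF(N)) :
  (U \subset 'N(N))%g ->
  'Res[U] ('Ind[N <*> U] psi) = 'Ind[U] ('Res[U :&: N] psi).
Proof.
move=> nNU; apply/cfun_inP => x Ux.
have nNM : (N <*> U \subset 'N(N))%g by rewrite join_subG normG.
rewrite cfResE ?joing_subr // cfIndE ?joing_subl // cfIndE ?subsetIl //.
have [Nx|notNx] := boolP (x \in N); last first.
  rewrite [X in _ * X = _]big1 ?[X in _ = _ * X]big1 ?mulr0 // => y Yy.
    by rewrite cfun0gen // genGid inE negb_and (memJ_norm x (subsetP nNU y Yy)) notNx orbT.
  by rewrite cfun0gen // genGid memJ_norm ?(subsetP nNM).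
have E1 : \sum_(y in U) ('Res[U :&: N] psi) (x ^ y)%g = \sum_(y in U) psi (x ^ y)%g.
  apply: eq_bigr => u Uu; rewrite cfResE ?subsetIr // inE groupJ //.
  by rewrite /= memJ_norm ?(subsetP nNU).
have E2 := @sum_mulg _ U N (fun y => psi (x ^ y)%g).
have E3 : \sum_(a in U) \sum_(b in N) psi (x ^ (a * b))%g = #|N|%:R * \sum_(y in U) psi (x ^ y)%g.
  rewrite mulr_sumr; apply: eq_bigr => u Uu.
  rewrite (eq_bigr (fun _ => psi (x ^ u)%g)); last first.
    by move=> n Nn; rewrite conjgM (cfunJ _ _ Nn).
  by rewrite sumr_const mulr_natl.
have eM : (N <*> U)%g = (U * N)%g by rewrite norm_joinEr // (normC nNU).
rewrite E1 (eq_bigl (fun y => y \in (U * N)%g)); last by move=> y; rewrite /= eM.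
have nz1 : #|U :&: N|%:R != 0 :> algC by rewrite pnatr_eq0 -lt0n cardG_gt0.
have nz2 : #|N|%:R != 0 :> algC by rewrite pnatr_eq0 -lt0n cardG_gt0.
have -> : \sum_(y in (U * N)%g) psi (x ^ y)%g = #|U :&: N|%:R^-1 * (#|N|%:R * \sum_(y in U) psi (x ^ y)%g).
  by rewrite -E3 E2 mulKf.
by rewrite mulrCA mulKf.
Qed.

Lemma share_constt (gT : finGroupType) (G : {group gT}) (a b : 'CF(G)) (i : Iirr G) :
  a \is a character -> b \is a character ->
  i \in irr_constt a -> i \in irr_constt b -> '[a, b] != 0.
Proof.
move=> Ca Cb; rewrite !irr_consttE => ai bi.
rewrite cfdot_char_r //; apply/negP => /eqP /psumr_eq0P H.
have pos : forall j : Iirr G, true -> 0 <= '[a, 'chi_j] * '[b, 'chi_j].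
  by move=> j _; rewrite natr_ge0 // rpredM ?Cnat_cfdot_char_irr.
have /eqP := H pos i isT.
by rewrite mulf_eq0 (negbTE ai) (negbTE bi).
Qed.

Lemma Ind_cfdot_neq0 (gT : finGroupType) (M G : {group gT}) (a b : 'CF(M)) :
  M \subset G -> a \is a character -> b \is a character ->
  '[a, b] != 0 -> '['Ind[G] a, 'Ind[G] b] != 0.
Proof.
move=> sMG Ca Cb; rewrite cfdot_char_r // => nz.
have [i _ ni] : exists2 i, true & '[a, 'chi_i] * '[b, 'chi_i] != 0.
  apply/exists_inP; apply: contraR nz => /exists_inPn H.
  by rewrite big1 // => i _; apply/eqP/negbNE/H.
move: ni; rewrite mulf_eq0 negb_or -!irr_consttE => /andP[ai bi].
have [k Hk] := constt_cfInd_irr i sMG.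
rewrite constt_Ind_Res in Hk.
apply: (@share_constt _ _ _ _ k); rewrite ?cfInd_char // irr_consttE -Frobenius_reciprocity.
  by apply: (@share_constt _ _ _ _ _ Ca _ ai Hk); rewrite cfRes_char ?irr_char.
by apply: (@share_constt _ _ _ _ _ Cb _ bi Hk); rewrite cfRes_char ?irr_char.
Qed.

Theorem lemma2p3 (gT : finGroupType) (G N : {group gT})
  (theta : 'CF(N)) (chi : 'CF(G)) :
  (N <| G)%g ->
  theta \in irr N -> ~~ (theta \is a linear_char) ->
  chi \in irr G -> 'Res[N] chi = theta ->
  mi_char chi -> mi_char theta.
Proof.
move=> nsNG thirr thnl chiirr resth [_ _ [U [lam [m [pUG lamirr m0 IndE]]]]].
split=> //.
have sNG := normal_sub nsNG; have nNG := normal_norm nsNG.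
have sUG := proper_sub pUG; have nNU := subset_trans sUG nNG.
have [i lamE] := irrP lamirr; have [t thE] := irrP thirr.
have [c chiE] := irrP chiirr.
have K (k : Iirr N) : '['Res[N] ('Ind[G] lam), 'chi_k] != 0 -> k = t.
  rewrite IndE raddfMn /= resth cfdotMnl thE cfdot_irr.
  have [->|_] := eqVneq t k => //.
  by change ((0:algC) *+ m != 0 -> k = t); rewrite mul0rn eqxx.
have [sNU|nsNU] := boolP (N \subset U).
  exfalso.
  have resU : 'Res[U] chi \in irr U.
    apply: (@cfRes_irr_irr _ U N); first by rewrite cfRes_char // chiE irr_char.
    by rewrite cfResRes // resth.
  have [j resE] := irrP resU.
  have : '[lam, 'Res[U] chi] = m%:R.
    by rewrite Frobenius_reciprocity IndE cfdotMnl chiE cfnorm_irr.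
  rewrite lamE resE cfdot_irr.
  case: eqP => [eij|_]; last by move/eqP; rewrite eq_sym pnatr_eq0 => /eqP m00; rewrite m00 in m0.
  move=> /esym/eqP; rewrite pnatr_eq1 => /eqP m1.
  have := congr1 (fun f : 'CF(G) => f 1%g) IndE.
  rewrite m1 /= cfInd1 // lamE eij -resE cfRes1 chiE.
  move/(congr1 (fun x => x / 'chi_c 1%g)); rewrite mulfK ?irr1_neq0 // divff ?irr1_neq0 //.
  move/eqP; rewrite pnatr_eq1 indexg_eq1 => sGU.
  by move: pUG; rewrite properE sGU andbF.
pose V := (U :&: N)%G.
have sVN : V \subset N by rewrite subsetIr.
have pVN : V \proper N by rewrite properE sVN subsetI subxx andbT.
have [j Hj] := constt_cfRes_irr V i.
have C (k : Iirr N) : k \in irr_constt ('Ind[N] 'chi_j) -> k = t.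
  rewrite constt_Ind_Res => jk.
  have nz : '['Res[V] lam, 'Res[V] 'chi_k] != 0.
    rewrite lamE; apply: (@share_constt _ _ _ _ j) => //; by rewrite cfRes_char ?irr_char.
  rewrite cfdot_Res_l -mackey // Frobenius_reciprocity in nz.
  have sMG : (N <*> U \subset G)%g by rewrite join_subG sNG sUG.
  have := @Ind_cfdot_neq0 _ _ _ _ _ sMG _ _ nz.
  rewrite !cfIndInd ?joing_subl ?joing_subr // -cfdot_Res_l.
  by move=> H; apply: K; apply: H; rewrite cfInd_char ?irr_char // lamE irr_char.
exists V, 'chi_j.
have Cch : 'Ind[N] 'chi_j \is a character by rewrite cfInd_char ?irr_char.
set d := '['Ind[N] 'chi_j, 'chi_t].
have dnat : d \in Num.nat by rewrite Cnat_cfdot_char_irr.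
have IE : 'Ind[N] 'chi_j = d *: theta.
  rewrite {1}[X in X = _]cfun_sum_cfdot (bigD1 t) //= big1 ?addr0 ?thE //.
  move=> k ntk; apply/eqP; rewrite scaler_eq0; apply/orP; left.
  by apply: contraNT ntk; rewrite -irr_consttE => /C ->.
exists (Num.trunc d); split => //; first exact: mem_irr.
  rewrite lt0n; apply/eqP => d0.
  have : 'Ind[N] 'chi_j 1%g != 0.
    by rewrite cfInd1 ?mulf_neq0 ?irr1_neq0 // pnatr_eq0 -lt0n indexg_gt0.
  by rewrite IE -(truncnK dnat) d0 scale0r cfunE eqxx.
by rewrite IE -{1}(truncnK dnat) scaler_nat.
Qed.
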